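(* Let $\lvert\psi\rangle$ be an $n$-qubit pure state. Then \[ \frac{4 \eta - 1}{3} \leq F_\mathcal{S}(\lvert\psi\rangle). \]
   Context: For $x=(a,b)\in\mathbb F_2^{2n}$ the Weyl operator is $W_x = i^{a\cdot b}X^{a_1}Z^{b_1}\otimes\cdots\otimes X^{a_n}Z^{b_n}$. For an $n$-qubit pure state $\lvert\psi\rangle$, $p_\psi(x)=2^{-n}\langle\psi|W_x|\psi\rangle^2$ (a probability distribution on $\mathbb F_2^{2n}$), $q_\psi(x)=\sum_y p_\psi(y)p_\psi(x+y)$, and $\eta \coloneqq \mathbb{E}_{x\sim q_\psi}[2^n p_\psi(x)] = 4^n\sum_{x\in\mathbb F_2^{2n}} p_\psi(x)^3$. The stabilizer fidelity is $F_\mathcal{S}(\lvert\psi\rangle)=\max_{\lvert\phi\rangle\text{ stabilizer}}\lvert\langle\phi|\psi\rangle\rvert^2$. *)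

(* Defs.v *)
From HB Require Import structures.
From mathcomp Require Import all_boot all_order all_algebra.
From mathcomp Require Import complex.
From mathcomp Require Import boolp classical_sets reals.
Set Implicit Arguments. Unset Strict Implicit. Unset Printing Implicit Defensive.
Import Order.TTheory GRing.Theory Num.Theory.
Local Open Scope ring_scope.
Local Open Scope complex_scope.

(* computational basis labels of n qubits: bit strings of length n *)
Definition bits (n : nat) := {ffun 'I_n -> bool}.

Definition F2n (n : nat) := (bits n * bits n)%type.

(* a . b computed as an integer (number of positions where both are 1),
   as needed for the phase i^{a.b} *)
Definition bdot n (a b : bits n) : nat := #|[set i | a i && b i]|.

Definition bxor n (a b : bits n) : bits n := [ffun i => a i (+) b i].

Definition qstate (R : realType) (n : nat) := bits n -> R[i].

(* Matrix entry <j| W_x |k> of W_x = i^{a.b} X^{a_1}Z^{b_1} (x) ... (x) X^{a_n}Z^{b_n}: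
   X^a Z^b |k> = (-1)^{b.k} |k xor a>. *)
Definition weyl_entry (R : realType) n (x : F2n n) (j k : bits n) : R[i] :=
  'i ^+ (bdot x.1 x.2) *
  (if j == bxor k x.1 then (-1) ^+ (bdot x.2 k) else 0).

Definition weyl_apply (R : realType) n (x : F2n n) (v : qstate R n) : qstate R n :=
  fun j => \sum_(k : bits n) weyl_entry R x j k * v k.

Definition braket (R : realType) n (phi psi : qstate R n) : R[i] :=
  \sum_(k : bits n) (phi k)^* * psi k.

Definition is_pure_state (R : realType) n (psi : qstate R n) : Prop :=
  braket psi psi = 1.

Definition pdist (R : realType) n (psi : qstate R n) (x : F2n n) : R[i] :=
  (2 ^+ n)^-1 * (braket psi (weyl_apply x psi)) ^+ 2.

Definition magic_eta (R : realType) n (psi : qstate R n) : R[i] :=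
  4 ^+ n * \sum_(x : F2n n) pdist psi x ^+ 3.

(* stabilizer state: a unit vector whose stabilizer group
   {+-W_x : W_x phi = +- phi} has 2^n elements (maximal abelian subgroup
   of the Pauli group not containing -I). *)
Definition is_stabilizer_state (R : realType) n (phi : qstate R n) : Prop :=
  is_pure_state phi /\
  #|[set x : F2n n | `[< weyl_apply x phi = phi \/ weyl_apply x phi = (fun j => - phi j) >]]|
    = (2 ^ n)%N.

Definition stab_fidelity (R : realType) n (psi : qstate R n) : R :=
  sup [set r : R | exists phi : qstate R n,
         is_stabilizer_state phi /\ r = complex.Re (`|braket phi psi| ^+ 2)].

(* Main.v *)
Require Import Defs.
From HB Require Import structures.
From mathcomp Require Import all_boot all_order all_algebra.
From mathcomp Require Import complex.
From mathcomp Require Import boolp classical_sets reals.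
From mathcomp Require Import ring lra.
Import Order.TTheory GRing.Theory Num.Theory.
Local Open Scope ring_scope.
Local Open Scope complex_scope.
Set Implicit Arguments. Unset Strict Implicit. Unset Printing Implicit Defensive.

Section Bits.
Variable n : nat.

Definition zb : bits n := [ffun => false].

Lemma bxorC (a b : bits n) : bxor a b = bxor b a.
Proof. by apply/ffunP=> i; rewrite !ffunE addbC. Qed.

Lemma bxorA (a b c : bits n) : bxor a (bxor b c) = bxor (bxor a b) c.
Proof. by apply/ffunP=> i; rewrite !ffunE addbA. Qed.

Lemma bxor0 (a : bits n) : bxor a zb = a.
Proof. by apply/ffunP=> i; rewrite !ffunE addbF. Qed.

Lemma bxorK (a b : bits n) : bxor (bxor a b) b = a.
Proof. by apply/ffunP=> i; rewrite !ffunE -addbA addbb addbF. Qed.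

Lemma bxorI (b : bits n) : injective (fun a : bits n => bxor a b).
Proof. by move=> a a' /(congr1 (fun c => bxor c b)); rewrite /= !bxorK. Qed.

Lemma bxorI2 (b : bits n) : injective (fun a : bits n => bxor b a).
Proof. by move=> a a'; rewrite !(bxorC b); apply: bxorI. Qed.

Lemma bxor_eq (j k a : bits n) : (j == bxor k a) = (k == bxor j a).
Proof.
apply/eqP/eqP=> ->; by rewrite bxorK.
Qed.

Lemma bxor_eq0 (j l : bits n) : (bxor j l == zb) = (j == l).
Proof.
apply/eqP/eqP=> [h|->]; last by apply/ffunP=> i; rewrite !ffunE addbb.
by rewrite -(bxorK j l) h bxorC bxor0.
Qed.

Definition sgb (T : pzRingType) (u v : bits n) : T :=
  \prod_i (if u i && v i then -1 else 1).

Lemma sgbC (T : pzRingType) u v : sgb T u v = sgb T v u.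
Proof. by apply: eq_bigr=> i _; rewrite andbC. Qed.

Lemma sgbD (T : comPzRingType) u v w :
  sgb T u (bxor v w) = sgb T u v * sgb T u w.
Proof.
rewrite /sgb -big_split /=; apply: eq_bigr=> i _; rewrite ffunE.
by case: (u i); case: (v i); case: (w i); rewrite /= ?mulr1 ?mul1r ?mulrNN ?mulr1.
Qed.

Lemma sgbDl (T : comPzRingType) u v w :
  sgb T (bxor v w) u = sgb T v u * sgb T w u.
Proof. by rewrite sgbC sgbD !(sgbC _ u). Qed.

Lemma sgb0 (T : pzRingType) v : sgb T zb v = 1.
Proof. by rewrite /sgb big1 // => i _; rewrite ffunE. Qed.

Lemma sgb0r (T : pzRingType) v : sgb T v zb = 1.
Proof. by rewrite sgbC sgb0. Qed.

Lemma sgbK (T : comPzRingType) u v : sgb T u v * sgb T u v = 1.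
Proof.
rewrite /sgb -big_split big1 // => i _ /=.
by case: ifP; rewrite ?mulrNN mulr1.
Qed.

Lemma sgb_pm1 (T : pzRingType) u v : sgb T u v = 1 \/ sgb T u v = -1.
Proof.
rewrite /sgb; apply: (big_ind (fun x : T => x = 1 \/ x = -1)); first by left.
  by move=> x y [->|->] [->|->]; rewrite ?mulr1 ?mul1r ?mulrNN ?mulr1; auto.
by move=> i _; case: ifP; auto.
Qed.

Lemma sgb_bdot (T : pzRingType) u v : (-1) ^+ bdot u v = sgb T u v.
Proof.
rewrite /bdot /sgb -sum1_card expr_sum big_mkcond /=.
apply: eq_bigr=> i _; rewrite inE; case: ifP=> //.
Qed.

Lemma card_bits : #|bits n| = (2 ^ n)%N.
Proof. by rewrite card_ffun card_bool card_ord. Qed.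

Lemma sgb_sum (T : numFieldType) v :
  \sum_(u : bits n) sgb T u v = if v == zb then (2 ^ n)%:R else 0.
Proof.
case: ifP=> [/eqP ->|hv].
  by rewrite (eq_bigr (fun _ => 1)) ?sumr_const ?card_bits // => u _; rewrite sgb0r.
have [i vi] : exists i, v i.
  apply/existsP; apply: contraFT hv; rewrite negb_exists=> /forallP h.
  by apply/eqP/ffunP=> i; rewrite ffunE; apply/negbTE/h.
pose e : bits n := [ffun j => j == i].
have hs u : sgb T (bxor u e) v = - sgb T u v.
  rewrite sgbDl; suff -> : sgb T e v = -1 by rewrite mulrN1.
  rewrite /sgb (bigD1 i) //= big1 ?ffunE ?eqxx ?vi ?mulr1 //.
  by move=> j /negbTE hj; rewrite ffunE hj.
have hinj : injective (fun u : bits n => bxor u e) by apply: bxorI.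
set S := \sum_u _.
have : S = - S.
  by rewrite {1}/S (reindex_inj hinj) /= (eq_bigr _ (fun u _ => hs u)) sumrN.
move/eqP; rewrite -addr_eq0 -mulr2n mulrn_eq0 /=; by move/eqP.
Qed.
End Bits.

Section Weyl.
Variable R : realType.
Variable n : nat.
Local Notation C := (R[i]).
Local Notation W := (@weyl_apply R n).

Definition om (x : F2n n) : C := 'i ^+ bdot x.1 x.2.

Lemma conjE (x : C) : x^*%R = conjc x.
Proof. by []. Qed.

Lemma sgbJ (u v : bits n) : (sgb C u v)^*%R = sgb C u v.
Proof.
by case: (sgb_pm1 C u v)=> ->; apply/eqP; rewrite eq_complex /= ?oppr0 !eqxx.
Qed.

Lemma om2 x : om x * om x = sgb C x.1 x.2.
Proof. by rewrite /om -exprMn -expr2 sqr_i sgb_bdot. Qed.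

Lemma omJ x : (om x)^*%R = om x * sgb C x.1 x.2.
Proof.
rewrite /om rmorphXn /= -sgb_bdot -exprMn.
congr (_ ^+ _); apply/eqP; rewrite eq_complex /=; by simpc.
Qed.

Lemma omK x : om x * (om x)^*%R = 1.
Proof. rewrite omJ. by rewrite mulrA om2 sgbK. Qed.

Lemma WE x v j : W x v j = om x * sgb C x.2 (bxor j x.1) * v (bxor j x.1).
Proof.
rewrite /weyl_apply (bigD1 (bxor j x.1)) //= big1 ?addr0.
  by rewrite /weyl_entry bxorK eqxx sgb_bdot.
by move=> k hk; rewrite /weyl_entry bxor_eq (negbTE hk) mulr0 mul0r.
Qed.


Implicit Types u v w : qstate R n.

Lemma omJ' x : (om x)^*%R = om x * sgb C x.1 x.2.
Proof. exact: omJ. Qed.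

Definition chi (x y : F2n n) (T : pzRingType) : T := sgb T y.2 x.1 * sgb T x.2 y.1.

Lemma WW x v : W x (W x v) = v.
Proof.
apply: funext=> j; rewrite !WE bxorK.
rewrite [sgb C _ (bxor j x.1)]sgbD.
transitivity (om x * om x * sgb C x.2 x.1 * (sgb C x.2 j * sgb C x.2 j) * v j); first ring.
by rewrite sgbK om2 sgbC sgbK !mul1r.
Qed.

Lemma Wcomm x y v j : W x (W y v) j = chi x y C * W y (W x v) j.
Proof.
rewrite !WE -!bxorA (bxorC y.1 x.1) /chi.
rewrite ![sgb C _ (bxor j _)]sgbD ?[sgb C _ (bxor x.1 _)]sgbD ?[sgb C _ (bxor y.1 _)]sgbD.

set s := sgb C x.2 y.1.
have hs : s * s = 1 by rewrite sgbK.
transitivity (om x * om y * sgb C x.2 j * sgb C y.2 j * sgb C x.2 x.1 * sgb C y.2 y.1 *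
   sgb C y.2 x.1 * (s * s) * v (bxor j (bxor x.1 y.1))); first by rewrite hs mulr1; ring.
ring.
Qed.

Lemma WD x u v : W x (fun j => u j + v j) = fun j => W x u j + W x v j.
Proof. by apply: funext=> j; rewrite !WE mulrDr. Qed.

Lemma WZ x (c : C) u : W x (fun j => c * u j) = fun j => c * W x u j.
Proof. by apply: funext=> j; rewrite !WE; ring. Qed.

Lemma WN x u : W x (fun j => - u j) = fun j => - W x u j.
Proof. by apply: funext=> j; rewrite !WE; ring. Qed.

Lemma braketJ (u v : qstate R n) : (braket u v)^*%R = braket v u.
Proof. by rewrite /braket rmorph_sum; apply: eq_bigr=> k _; rewrite rmorphM /= conjCK mulrC. Qed.

Lemma braketDr u v w : braket u (fun j => v j + w j) = braket u v + braket u w.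
Proof. by rewrite /braket -big_split; apply: eq_bigr=> k _; rewrite mulrDr. Qed.

Lemma braketZr u (c : C) v : braket u (fun j => c * v j) = c * braket u v.
Proof. by rewrite /braket mulr_sumr; apply: eq_bigr=> k _; ring. Qed.

Lemma braketDl u v w : braket (fun j => u j + v j) w = braket u w + braket v w.
Proof. by rewrite /braket -big_split; apply: eq_bigr=> k _; rewrite rmorphD /= mulrDl. Qed.

Lemma braketZl u (c : C) v : braket (fun j => c * u j) v = c^*%R * braket u v.
Proof. by rewrite /braket mulr_sumr; apply: eq_bigr=> k _; rewrite rmorphM /=; ring. Qed.

Lemma braket_herm x u v : braket u (W x v) = braket (W x u) v.
Proof.
rewrite /braket (reindex_inj (@bxorI _ x.1)) /=.
apply: eq_bigr=> k _; rewrite !WE bxorK !rmorphM /= omJ' sgbJ sgbD.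
transitivity (om x * (sgb C x.2 k * (u (bxor k x.1))^*%R * v k) *
  (sgb C x.1 x.2 * sgb C x.2 x.1)); last by ring.
by rewrite (sgbC _ x.1) sgbK mulr1; ring.
Qed.

Lemma braket_ge0 u : 0 <= braket u u.
Proof. by apply: sumr_ge0=> k _; rewrite mulrC mul_conjC_ge0. Qed.



Lemma sum_F2n (F : F2n n -> C) : \sum_x F x = \sum_(a : bits n) \sum_(b : bits n) F (a, b).
Proof. by rewrite pair_big; apply: eq_bigr=> -[a b]. Qed.

Lemma ident (phi psi : qstate R n) :
  \sum_(x : F2n n) braket phi (W x phi) * (braket psi (W x psi))^*%R
  = (2 ^ n)%:R * (braket phi psi * (braket phi psi)^*%R).
Proof.
pose G a j l := (phi j)^*%R * phi (bxor j a) * psi l * (psi (bxor l a))^*%R.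
have step1 x : braket phi (W x phi) * (braket psi (W x psi))^*%R =
   \sum_j \sum_l G x.1 j l * (sgb C x.2 (bxor j x.1) * sgb C x.2 (bxor l x.1)).
  rewrite braketJ /braket big_distrl /=; apply: eq_bigr=> j _.
  rewrite big_distrr /=; apply: eq_bigr=> l _.
  rewrite !WE !rmorphM /= omJ' sgbJ /G.
  transitivity ((phi j)^*%R * phi (bxor j x.1) * psi l * (psi (bxor l x.1))^*%R *
     (sgb C x.2 (bxor j x.1) * sgb C x.2 (bxor l x.1)) * (om x * om x * sgb C x.1 x.2)); last first.
    by rewrite om2 sgbK mulr1.
  ring.
rewrite (eq_bigr _ (fun x _ => step1 x)) sum_F2n /=.
have step2 a : \sum_b \sum_j \sum_l G a j l * (sgb C b (bxor j a) * sgb C b (bxor l a))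
    = (2 ^ n)%:R * \sum_j G a j j.
  rewrite exchange_big /= mulr_sumr; apply: eq_bigr=> j _.
  rewrite exchange_big /= (bigD1 j) //= [X in _ + X]big1 ?addr0.
    rewrite -mulr_sumr; under eq_bigr do rewrite -sgbD.
    by rewrite sgb_sum bxor_eq0 eqxx mulrC.
  move=> l hl; rewrite -mulr_sumr; under eq_bigr do rewrite -sgbD.
  rewrite sgb_sum bxor_eq0 ifF ?mulr0 //.
  by apply: contraNF hl=> /eqP /bxorI ->.
rewrite (eq_bigr _ (fun a _ => step2 a)) -mulr_sumr; congr (_ * _).
rewrite exchange_big /= /braket big_distrl /=; apply: eq_bigr=> j _.
rewrite rmorph_sum big_distrr /= (reindex_inj (@bxorI2 _ j)) /=.
apply: eq_bigr=> a _; rewrite /G rmorphM /= conjCK (bxorC j (bxor j a)) (bxorC j a) bxorK; ring.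
Qed.

Definition dd (phi : qstate R n) x := braket phi (W x phi).

Definition St (phi : qstate R n) : {set F2n n} :=
  [set x | `[< W x phi = phi \/ W x phi = (fun j => - phi j) >]].

Lemma StP phi x : reflect (W x phi = phi \/ W x phi = (fun j => - phi j)) (x \in St phi).
Proof. by rewrite inE; apply: (iffP idP)=> /asboolP. Qed.

Lemma ddJ phi x : (dd phi x)^*%R = dd phi x.
Proof. by rewrite /dd braketJ braket_herm. Qed.

Lemma ddRe phi x : dd phi x = (complex.Re (dd phi x))%:C.
Proof.
by rewrite ReJ_add -conjE ddJ; field.
Qed.

Lemma braketNr u v : braket u (fun j => - v j) = - braket u v.
Proof. by rewrite /braket -sumrN; apply: eq_bigr=> k _; rewrite mulrN. Qed.

Lemma braketNl u v : braket (fun j => - u j) v = - braket u v.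
Proof. by rewrite /braket -sumrN; apply: eq_bigr=> k _; rewrite rmorphN /= mulNr. Qed.

Lemma chiC x y (T : comPzRingType) : chi x y T = chi y x T.
Proof. by rewrite /chi mulrC. Qed.

Lemma chi_pm1 x y (T : pzRingType) : chi x y T = 1 \/ chi x y T = -1.
Proof.
rewrite /chi; case: (sgb_pm1 T y.2 x.1)=> ->; case: (sgb_pm1 T x.2 y.1)=> ->;
  rewrite ?mulr1 ?mul1r ?mulrNN ?mulr1; auto.
Qed.

Lemma dd_St phi x : braket phi phi = 1 -> x \in St phi -> dd phi x = 1 \/ dd phi x = -1.
Proof.
move=> h1 /StP [] h; rewrite /dd h; [left|right] => //.
by rewrite braketNr h1.
Qed.

Lemma dd_anti phi x y : y \in St phi -> chi x y C = -1 -> dd phi x = 0.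
Proof.
move=> /StP hy hc.
have e0 : braket phi (W x (W y phi)) = - braket (W y phi) (W x phi).
  rewrite (_ : W x (W y phi) = fun j => chi x y C * W y (W x phi) j); last first.
    by apply: funext=> j; rewrite Wcomm.
  by rewrite braketZr hc mulN1r braket_herm.
suff : dd phi x = - dd phi x.
  by move/eqP; rewrite -addr_eq0 -mulr2n mulrn_eq0 /= => /eqP.
case: hy=> e; rewrite e in e0.
  by rewrite -e0.
by rewrite WN braketNr braketNl opprK in e0; rewrite /dd -e0 opprK.
Qed.


Lemma dd_norm phi x : dd phi x * (dd phi x)^*%R = (complex.Re (dd phi x) ^+ 2)%:C.
Proof. by rewrite ddJ {1 2}(ddRe phi x) -rmorphM expr2. Qed.

Lemma St_card_le phi : braket phi phi = 1 -> (#|St phi|%:R : C) <= (2 ^ n)%:R.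
Proof.
move=> h1; have := ident phi phi; rewrite h1 conjC1 !mulr1=> <-.
rewrite -sumr_const big_mkcond /=; apply: ler_sum=> x _.
case: ifP=> hx; last by rewrite mul_conjC_ge0.
by case: (dd_St h1 hx)=> e; rewrite /dd in e; rewrite e ?rmorphN /= conjC1 ?mulrNN mulr1.
Qed.

Lemma St_card_eq phi : braket phi phi = 1 ->
  (forall x, x \in St phi \/ exists2 y, y \in St phi & chi x y C = -1) ->
  #|St phi| = (2 ^ n)%N.
Proof.
move=> h1 hcl; apply/eqP; rewrite -(eqr_nat C).
have := ident phi phi; rewrite h1 conjC1 !mulr1=> <-.
rewrite -sumr_const big_mkcond /=; apply/eqP; apply: eq_bigr=> x _.
case: ifP=> hx.
  by case: (dd_St h1 hx)=> e; rewrite /dd in e; rewrite e ?rmorphN /= conjC1 ?mulrNN mulr1.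
case: (hcl x); first by rewrite hx.
by move=> [y hy hc]; have := dd_anti hy hc; rewrite /dd=> ->; rewrite mul0r.
Qed.

Definition nz (v : qstate R n) := exists j, v j != 0.

Lemma proj_step v x : nz v -> exists w, [/\ nz w, x \in St w &
   forall y, y \in St v -> chi x y C = 1 -> y \in St w].
Proof.
move=> [j0 hj0].
have key (s : C) : (s = 1 \/ s = -1) -> W x (fun j => v j + s * W x v j) = fun j => s * (v j + s * W x v j).
  move=> hs; rewrite WD WZ WW; apply: funext=> j.
  by case: hs=> ->; rewrite ?mul1r ?mulN1r ?opprK; ring.
have keyy (s : C) y : y \in St v -> chi x y C = 1 -> y \in St (fun j => v j + s * W x v j).
  move=> /StP hy hc; apply/StP; rewrite WD WZ.
  have hWW : W y (W x v) = W x (W y v).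
    by apply: funext=> j; rewrite Wcomm chiC hc mul1r.
  rewrite hWW; case: hy=> ->; [left|right]; first by [].
  by rewrite WN; apply: funext=> j; ring.
have [hp|hp] := pselect (nz (fun j => v j + 1 * W x v j)).
  exists (fun j => v j + 1 * W x v j); split=> //; last by move=> y; apply: keyy.
  apply/StP; left; rewrite key; last by left.
  by apply: funext=> j; rewrite mul1r.
exists (fun j => v j + -1 * W x v j); split; last by move=> y; apply: keyy.
- exists j0; apply: contra hj0 => /eqP h0.
  have : v j0 + 1 * W x v j0 = 0.
    by apply/eqP; apply/negPn/negP=> hne; apply: hp; exists j0.
  move=> h1; apply/eqP.
  have e : v j0 *+ 2 = (v j0 + 1 * W x v j0) + (v j0 + -1 * W x v j0) by rewrite mulr2n; ring.
  by move: e; rewrite h0 h1 addr0=> /eqP; rewrite mulrn_eq0 /= => /eqP.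
- apply/StP; right; rewrite key; last by right.
  apply: funext=> j /=; ring.
Qed.

Lemma phase1 (T : {set F2n n}) :
  (forall t t', t \in T -> t' \in T -> chi t t' C = 1) ->
  forall v, nz v -> exists w, nz w /\ T \subset St w.
Proof.
move=> hT.
suff H k : forall v, (#|T :\: St v| <= k)%N -> nz v -> exists w, nz w /\ T \subset St w.
  by move=> v; apply: (H _ v (leqnn _)).
elim: k => [|k IH] v hk hv.
  by exists v; split=> //; move: hk; rewrite leqn0 cards_eq0 finset.setD_eq0.
have [hs|hs] := boolP (T \subset St v); first by exists v.
have [t ht] : exists t, t \in T :\: St v.
  apply/set0Pn; by rewrite finset.setD_eq0.
move: (ht); rewrite finset.in_setD => /andP [htS htT].
have [w [hw htw hy]] := proj_step t hv.
apply: (IH w) => //.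
have hpr : T :\: St w \proper T :\: St v.
  apply/properP; split.
    apply/fintype.subsetP=> y; rewrite !finset.in_setD=> /andP [h1 h2]; rewrite h2 andbT.
    by apply: contra h1=> hyv; apply: hy=> //; apply: hT.
  by exists t => //; rewrite finset.in_setD htw.
by have := proper_card hpr; move=> h; rewrite -ltnS; apply: leq_trans h hk.
Qed.

Definition closedSt (phi : qstate R n) :=
  forall x, x \in St phi \/ exists2 y, y \in St phi & chi x y C = -1.

Lemma phase2 v : nz v -> exists w, [/\ nz w, St v \subset St w & closedSt w].
Proof.
suff H k : forall v, (#|~: St v| <= k)%N -> nz v -> exists w, [/\ nz w, St v \subset St w & closedSt w].
  by apply: (H _ v (leqnn _)).
elim: k => [|k IH] {}v hk hv.
  exists v; split=> //; move=> x; left; move: hk; rewrite leqn0 cards_eq0 => /eqP h.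
  by move: (finset.in_setC x (St v)); rewrite h inE => /esym /negbFE.
have [hc|hc] := pselect (closedSt v); first by exists v; split.
have [x [hx hxc]] : exists x, x \notin St v /\ forall y, y \in St v -> chi x y C = 1.
  apply: contra_notP hc=> hn x.
  have [hx|hx] := boolP (x \in St v); first by left.
  right; apply: contra_notP hn=> hn2; exists x; split=> // y hy.
  case: (chi_pm1 x y C)=> // e; by exfalso; apply: hn2; exists y.
have [w [hw hxw hyw]] := proj_step x hv.
have hsub : St v \subset St w by apply/fintype.subsetP=> y hy; apply: hyw=> //; apply: hxc.
have [w' [hw' hs' hc']] : exists w', [/\ nz w', St w \subset St w' & closedSt w'].
  apply: (IH w) => //.
  have hpr : ~: St w \proper ~: St v.
    apply/properP; split; first by rewrite finset.setCS.
    by exists x; rewrite !finset.in_setC ?hxw // (negbTE hx).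
  by have := proper_card hpr; move=> h; rewrite -ltnS; apply: leq_trans h hk.
by exists w'; split=> //; apply: fintype.subset_trans hs'.
Qed.

Lemma normalize w : nz w -> exists phi, braket phi phi = 1 /\ St w \subset St phi.
Proof.
move=> [j0 hj0].
have s0 : 0 <= braket w w by apply: braket_ge0.
have sR : braket w w = (complex.Re (braket w w))%:C by rewrite RRe_real // ger0_real.
set r := complex.Re (braket w w) in sR.
have r0 : 0 <= r by rewrite -ler0c -sR.
have rn0 : r != 0.
  apply/eqP=> hr; move: sR; rewrite hr => /eqP; rewrite /braket psumr_eq0; last first.
    by move=> k _; rewrite mulrC mul_conjC_ge0.
  move=> /allP /(_ j0) h; move: (h (mem_index_enum _)) => /=.
  by rewrite mulf_eq0 conjC_eq0 orbb (negbTE hj0).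
exists (fun j => ((Num.sqrt r)^-1)%:C * w j); split.
  rewrite braketZl braketZr sR conjE conjc_real -!rmorphM /=.
  have hs : Num.sqrt r ^+ 2 = r by rewrite sqr_sqrtr.
  have hs0 : Num.sqrt r != 0 by rewrite sqrtr_eq0 -ltNge lt_neqAle eq_sym rn0 r0.
  congr (_ %:C); by rewrite mulrA -invfM -expr2 hs mulVf.
apply/fintype.subsetP=> x /StP hx; apply/StP; rewrite WZ.
by case: hx=> ->; [left|right]=> //; apply: funext=> j; rewrite mulrN.
Qed.

Lemma braketJ_herm x u v : braket (W x u) v = braket u (W x v).
Proof. by rewrite braket_herm. Qed.

Lemma CS psi w : braket psi psi = 1 ->
  braket psi w * (braket psi w)^*%R <= braket w w.
Proof.
move=> h1; set c := braket psi w.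
have := braket_ge0 (fun j => w j + (- c) * psi j).
rewrite braketDl !braketDr braketZl (braketZr w (-c) psi) (braketZl psi (-c)) (braketZr psi (-c) psi).
rewrite h1 braketJ -/c rmorphN /= mulr1.
move=> h; rewrite -subr_ge0; apply: le_trans h _; rewrite le_eqVlt; apply/orP; left; apply/eqP; ring.
Qed.

Definition rr (psi : qstate R n) x : R := complex.Re (dd psi x).

Lemma rr_le1 psi x : braket psi psi = 1 -> rr psi x ^+ 2 <= 1.
Proof.
move=> h1; have := CS (W x psi) h1.
rewrite -/(dd psi x) dd_norm braketJ_herm WW h1 => h.
by rewrite -lecR.
Qed.

Lemma sum_rr2 psi : braket psi psi = 1 -> \sum_x rr psi x ^+ 2 = (2 ^ n)%:R.
Proof.
move=> h1; have := ident psi psi; rewrite h1 conjC1 !mulr1.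
under eq_bigr do rewrite -/(dd _ _) dd_norm.
rewrite -rmorph_sum -(rmorph_nat (real_complex R)) => /complexI //.
Qed.

Lemma conjR (a : R) : (a%:C)^*%R = a%:C :> C.
Proof. by rewrite conjE conjc_real. Qed.

Lemma anti_bound psi t t' : braket psi psi = 1 -> chi t t' C = -1 ->
  rr psi t ^+ 2 + rr psi t' ^+ 2 <= 1.
Proof.
move=> h1 hc; set a := rr psi t; set b := rr psi t'.
pose w := fun j => a%:C * W t psi j + b%:C * W t' psi j.
have hpw : braket psi w = (a ^+ 2 + b ^+ 2)%:C.
  rewrite /w braketDr !braketZr -/(dd psi t) -/(dd psi t') (ddRe psi t) (ddRe psi t').
  by rewrite -/a -/b -!rmorphM -rmorphD /= !expr2.
have hww : braket w w = (a ^+ 2 + b ^+ 2)%:C.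
  rewrite /w braketDl !braketDr !braketZl !braketZr !conjR !braketJ_herm !WW h1.
  have e : braket psi (W t' (W t psi)) = - braket psi (W t (W t' psi)).
    rewrite (_ : W t' (W t psi) = fun j => chi t' t C * W t (W t' psi) j); last first.
      by apply: funext=> j; rewrite Wcomm.
    by rewrite braketZr chiC hc mulN1r.
  rewrite e !rmorphD !rmorphXn /= !expr2; ring.
have := CS w h1; rewrite hww hpw conjR -rmorphM lecR => h.
have hs : 0 <= a ^+ 2 + b ^+ 2 by rewrite addr_ge0 // sqr_ge0.
nra.
Qed.

Lemma sum_F2nT (T : nmodType) (F : F2n n -> T) :
  \sum_x F x = \sum_(a : bits n) \sum_(b : bits n) F (a, b).
Proof. by rewrite pair_big; apply: eq_bigr=> -[a b]. Qed.

Lemma sgbCR (u v : bits n) : sgb C u v = (sgb R u v)%:C.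
Proof. by rewrite /sgb rmorph_prod; apply: eq_bigr=> i _; case: ifP; rewrite ?rmorphN rmorph1. Qed.

Lemma chiCR x y : chi x y C = (chi x y R)%:C.
Proof. by rewrite /chi !sgbCR rmorphM. Qed.

Lemma fourier x x' :
  \sum_y chi x y R * chi x' y R = if x == x' then ((2 ^ n)%:R ^+ 2 : R) else 0.
Proof.
case: x x' => [a b] [a' b']; rewrite sum_F2nT /chi /=.
have e (u v : bits n) : sgb R v a * sgb R b u * (sgb R v a' * sgb R b' u) =
   sgb R (bxor b b') u * sgb R v (bxor a a').
  rewrite sgbD sgbDl; ring.
under eq_bigr do under eq_bigr do rewrite e.
under eq_bigr do rewrite -mulr_sumr sgb_sum.
rewrite -mulr_suml.
rewrite (eq_bigr (fun u : bits n => sgb R u (bxor b b'))); last by move=> u _; rewrite sgbC.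
rewrite sgb_sum !bxor_eq0 xpair_eqE.
by case: (a == a'); case: (b == b'); rewrite /= ?mulr0 ?mul0r // expr2.
Qed.

Lemma W0 v : W (zb n, zb n) v = v.
Proof.
apply: funext=> j; rewrite WE /= bxor0 sgb0 /om /=.
rewrite (_ : bdot _ _ = 0%N) ?expr0 ?mul1r //.
by rewrite /bdot; apply/eqP; rewrite cards_eq0; apply/eqP/setP=> i; rewrite !inE !ffunE.
Qed.

Lemma dd0 phi : braket phi phi = 1 -> dd phi (zb n, zb n) = 1.
Proof. by rewrite /dd W0. Qed.

Lemma ReM (a : R) (w : C) : complex.Re (a%:C * w) = a * complex.Re w.
Proof. by case: w => x y /=; rewrite mul0r subr0. Qed.

Lemma dd_shift phi0 x y : dd (W y phi0) x = chi x y C * dd phi0 x.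
Proof.
rewrite /dd braketJ_herm.
rewrite (_ : W x (W y phi0) = fun j => chi x y C * W y (W x phi0) j); last first.
  by apply: funext=> j; rewrite Wcomm.
by rewrite WZ WW braketZr.
Qed.

Lemma fid_sum phi0 psi y :
  (2 ^ n)%:R * complex.Re (`|braket (W y phi0) psi| ^+ 2)
  = \sum_x chi x y R * rr phi0 x * rr psi x.
Proof.
rewrite -ReM normCK rmorph_nat -ident.
rewrite (eq_bigr (fun x => (chi x y R * rr phi0 x * rr psi x)%:C)); last first.
  move=> x _; rewrite -/(dd (W y phi0) x) -/(dd psi x) dd_shift ddJ.
  by rewrite (ddRe phi0) (ddRe psi) chiCR -!rmorphM.
by rewrite -rmorph_sum.
Qed.

Lemma chi0 y (T : pzRingType) : chi (zb n, zb n) y T = 1.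
Proof. by rewrite /chi sgb0r sgb0 mulr1. Qed.

Lemma get_phi0 psi : braket psi psi = 1 ->
  exists phi0, [/\ braket phi0 phi0 = 1, closedSt phi0 &
     [set x | 1/2 < rr psi x ^+ 2] \subset St phi0].
Proof.
move=> h1; set T := [set x | 1/2 < rr psi x ^+ 2].
have hT : forall t t', t \in T -> t' \in T -> chi t t' C = 1.
  move=> t t'; rewrite !finset.inE => ht ht'.
  case: (chi_pm1 t t' C) => // hc.
  have := anti_bound h1 hc; move=> hb.
  have : 1 < rr psi t ^+ 2 + rr psi t' ^+ 2 by move: ht ht'; clear; lra.
  by rewrite ltNge hb.
have hnz : nz psi.
  have [//|hn] := pselect (nz psi).
  exfalso; move: (@oner_neq0 C); rewrite -h1 /braket big1 ?eqxx //.
  move=> k _; have : psi k = 0 by apply/eqP/negPn/negP=> hk; apply: hn; exists k.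
  by move=> ->; rewrite mulr0.
have [w1 [hw1 hTw1]] := phase1 hT hnz.
have [w2 [hw2 hs12 hc2]] := phase2 hw1.
have [phi [hphi hs2]] := normalize hw2.
exists phi; split=> //.
  move=> x; case: (hc2 x)=> [hx|[y hy hxy]].
    by left; apply: (fintype.subsetP hs2).
  by right; exists y => //; apply: (fintype.subsetP hs2).
by apply: fintype.subset_trans hs2; apply: fintype.subset_trans hs12.
Qed.

Lemma abstract_bound (N : R) (F e r : F2n n -> R) (T : {set F2n n}) :
  0 < N ->
  (forall y, 0 <= F y) ->
  (forall y, N * F y = \sum_x chi x y R * e x * r x) ->
  (forall x x', \sum_y chi x y R * chi x' y R = if x == x' then N ^+ 2 else 0) ->
  e (zb n, zb n) * r (zb n, zb n) = 1 ->
  (forall x, x \in T -> e x ^+ 2 = 1) ->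
  exists y0, \sum_(x in T) r x ^+ 2 <= N * F y0.
Proof.
move=> N0 F0 hF hfour h00 hT.
have hN : N != 0 by rewrite gt_eqF.
have sF : \sum_y F y = N.
  apply: (mulfI hN); rewrite mulr_sumr (eq_bigr _ (fun y _ => hF y)) exchange_big /=.
  rewrite (eq_bigr (fun x => e x * r x * (if x == (zb n, zb n) then N ^+ 2 else 0))); last first.
    move=> x _; rewrite -hfour mulr_sumr; apply: eq_bigr=> y _; rewrite chi0; ring.
  rewrite (bigD1 (zb n, zb n)) //= big1 ?addr0 ?eqxx ?h00; first by rewrite expr2 mul1r.
  by move=> x /negbTE ->; rewrite mulr0.
have sF2' : N ^+ 2 * \sum_y F y ^+ 2 = N ^+ 2 * \sum_x e x ^+ 2 * r x ^+ 2.
  transitivity (\sum_x N ^+ 2 * (e x ^+ 2 * r x ^+ 2)); last by rewrite mulr_sumr.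
  rewrite mulr_sumr.
  rewrite (eq_bigr (fun y => (N * F y) * (N * F y))); last by move=> y _; ring.
  under eq_bigr do rewrite hF big_distrl /=.
  under eq_bigr do under eq_bigr do rewrite big_distrr /=.
  rewrite exchange_big /=; under eq_bigr do rewrite exchange_big /=.
  apply: eq_bigr=> x _.
  rewrite (eq_bigr (fun x' => e x * r x * e x' * r x' * (if x == x' then N ^+ 2 else 0))); last first.
    move=> x' _; rewrite -hfour mulr_sumr; apply: eq_bigr=> y _; ring.
  rewrite (bigD1 x) //= big1 ?addr0 ?eqxx; first by ring.
  by move=> x' hx'; rewrite eq_sym (negbTE hx') mulr0.
have sF2 : \sum_y F y ^+ 2 = \sum_x e x ^+ 2 * r x ^+ 2.
  by move/(mulfI (expf_neq0 2 hN)): sF2'.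
have [y0 _ hmax] := @arg_maxP _ R (F2n n) (zb n, zb n) xpredT F erefl.
exists y0.
have h1 : \sum_(x in T) r x ^+ 2 <= \sum_x e x ^+ 2 * r x ^+ 2.
  rewrite big_mkcond /=; apply: ler_sum=> x _; case: ifP=> hx.
    by rewrite hT // mul1r.
  by rewrite mulr_ge0 // sqr_ge0.
apply: (le_trans h1); rewrite -sF2 -sF mulr_suml.
apply: ler_sum=> y _; rewrite expr2 ler_wpM2l //.
exact: hmax.
Qed.

Lemma re_sq_ge0 (z : C) : 0 <= complex.Re (`|z| ^+ 2).
Proof.
have : 0 <= `|z| ^+ 2 by rewrite exprn_ge0.
by rewrite lecE => /andP [_ h].
Qed.

Lemma rr_St phi x : braket phi phi = 1 -> x \in St phi -> rr phi x ^+ 2 = 1.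
Proof.
move=> h1 hx; rewrite /rr; case: (dd_St h1 hx)=> ->; last by rewrite /= sqrrN expr1n.
by rewrite /= expr1n.
Qed.

Lemma St_shift phi0 y : St phi0 \subset St (W y phi0).
Proof.
apply/fintype.subsetP=> x /StP hx; apply/StP.
rewrite (_ : W x (W y phi0) = fun j => chi x y C * W y (W x phi0) j); last first.
  by apply: funext=> j; rewrite Wcomm.
case: (chi_pm1 x y C)=> ->; case: hx=> ->.
- by left; apply: funext=> j; rewrite mul1r.
- by right; apply: funext=> j; rewrite mul1r WN.
- by right; apply: funext=> j; rewrite mulN1r.
- by left; apply: funext=> j; rewrite WN mulN1r opprK.
Qed.

Lemma main_R psi : braket psi psi = 1 -> exists phi, is_stabilizer_state phi /\
  let S6 := \sum_x rr psi x ^+ 6 in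
  let N := (2 ^ n)%:R : R in
  (4 * (N^-1 * S6) - 1) / 3 <= complex.Re (`|braket phi psi| ^+ 2).
Proof.
move=> h1.
have [phi0 [h0 hc hTs]] := get_phi0 h1.
set T := [set x | 1/2 < rr psi x ^+ 2] in hTs.
have hcard := St_card_eq h0 hc.
set N := (2 ^ n)%:R : R.
have N0 : 0 < N by rewrite ltr0n expn_gt0.
pose F y := complex.Re (`|braket (W y phi0) psi| ^+ 2).
have [y0 hy0] : exists y0, \sum_(x in T) rr psi x ^+ 2 <= N * F y0.
  apply: (@abstract_bound N F (rr phi0) (rr psi) T N0).
  - by move=> y; apply: re_sq_ge0.
  - by move=> y; rewrite /F fid_sum.
  - by move=> x x'; rewrite fourier.
  - by rewrite /rr !dd0 // mul1r.
  - by move=> x hx; apply: rr_St=> //; apply: (fintype.subsetP hTs).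
exists (W y0 phi0); split.
  have hu : braket (W y0 phi0) (W y0 phi0) = 1 by rewrite braketJ_herm WW.
  split=> //; change (#|St (W y0 phi0)| = (2 ^ n)%N).
  apply/eqP; rewrite eqn_leq; apply/andP; split.
    by have := St_card_le hu; rewrite ler_nat.
  by rewrite -hcard; apply: subset_leq_card; apply: St_shift.
move=> S6 N'; rewrite /N' -/N -/(F y0).
set A := \sum_(x in T) rr psi x ^+ 2 in hy0.
have hS := sum_rr2 h1; rewrite -/N in hS.
have h6 : \sum_x rr psi x ^+ 6 <= \sum_x (rr psi x ^+ 2 / 4 + (if x \in T then 3 / 4 * rr psi x ^+ 2 else 0)).
  apply: ler_sum=> x _.
  have h1x := rr_le1 x h1; have h0x := sqr_ge0 (rr psi x).
  rewrite (_ : rr psi x ^+ 6 = (rr psi x ^+ 2) ^+ 3); last by rewrite -exprM.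
  move: h1x h0x; set u := rr psi x ^+ 2 => h1x h0x.
  case: ifP=> hx; rewrite finset.inE -/u in hx.
    have hu2 : u ^+ 2 <= 1 by rewrite expr2; nra.
    have : u ^+ 3 <= u by rewrite exprSr; nra.
    lra.
  have hu : u <= 1/2 by rewrite leNgt hx.
  have hu2 : u ^+ 2 <= 1/4 by rewrite expr2; nra.
  have : u ^+ 3 <= u / 4 by rewrite exprSr; nra.
  lra.
have hsplit : \sum_x (rr psi x ^+ 2 / 4 + (if x \in T then 3 / 4 * rr psi x ^+ 2 else 0))
   = N / 4 + 3 / 4 * A.
  rewrite big_split /= -mulr_suml hS; congr (_ + _).
  rewrite /A mulr_sumr [in RHS]big_mkcond /=; apply: eq_bigr=> x _.
  by case: ifP; rewrite ?mulr0.
rewrite hsplit in h6.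
have hS6 : 4 * S6 <= 3 * A + N by rewrite /S6; lra.
have hA : A / N <= F y0 by rewrite ler_pdivrMr // mulrC.
have hq : 4 * (S6 / N) <= 3 * (A / N) + 1.
  have : 4 * S6 / N <= (3 * A + N) / N by rewrite ler_pM2r ?invr_gt0.
  rewrite (_ : (3 * A + N) / N = 3 * (A / N) + 1); last by field; rewrite gt_eqF.
  by move=> h; rewrite mulrA.
rewrite (mulrC N^-1).
move: hq hA; set s := S6 / N; set a := A / N => hq hA.
lra.
Qed.

Lemma pdistE psi x : pdist psi x = (((2 ^ n)%:R : R)^-1 * rr psi x ^+ 2)%:C.
Proof.
rewrite /pdist -/(dd psi x) (ddRe psi x) -/(rr psi x).
have e2 : (2 : C) ^+ n = ((2 ^ n)%:R : R)%:C.
  rewrite -natrX. by rewrite raddfMn /= rmorph1.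
by rewrite e2 rmorphM /= fmorphV rmorphXn.
Qed.

Lemma etaE psi : magic_eta psi =
  (((2 ^ n)%:R : R)^-1 * \sum_x rr psi x ^+ 6)%:C.
Proof.
rewrite /magic_eta; under eq_bigr do rewrite pdistE -rmorphXn.
have e4 : (4 : C) ^+ n = ((2 ^ n)%:R ^+ 2 : R)%:C.
  rewrite -!natrX raddfMn /= rmorph1; congr (_ *+ _); by rewrite -expnM mulnC expnM.
rewrite e4 -rmorph_sum -rmorphM; congr (_ %:C).
have hN : ((2 ^ n)%:R : R) != 0 by rewrite pnatr_eq0 expn_eq0.
under eq_bigr do rewrite exprMn -exprM.
rewrite -mulr_sumr /=; field; exact: hN.
Qed.

End Weyl.

Lemma cR (R : realType) (X : R) : (4 * X%:C - 1) / 3 = ((4 * X - 1) / 3)%:C :> R[i].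
Proof.
have cn (k : nat) : ((k%:R : R))%:C = k%:R :> R[i] by rewrite raddfMn /= rmorph1.
by rewrite fmorph_div rmorphB rmorphM rmorph1 /= !cn.
Qed.

Theorem proposition6p1 (R : realType) (n : nat) (psi : qstate R n) :
  is_pure_state psi ->
  (4 * magic_eta psi - 1) / 3 <= (stab_fidelity psi)%:C.
Proof.
move=> h1; rewrite /is_pure_state in h1.
have [phi [hst hineq]] := main_R h1.
have hub : has_ubound [set r : R | exists phi : qstate R n,
         is_stabilizer_state phi /\ r = complex.Re (`|braket phi psi| ^+ 2)].
  exists 1 => r [phi' [[hu _] ->]].
  have := CS phi' h1; rewrite hu -normCK -braketJ norm_conjC => h.
  by move: h; rewrite lecE => /andP [_ h].
rewrite etaE cR.
rewrite lecR /stab_fidelity; apply: (le_trans hineq); apply: (ub_le_sup hub).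
by exists phi.
Qed.
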